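(* For every natural number $n$ and all annotated terms $g,d$: if $\mathrm{decide}(n,g,d)=\mathrm{true}$, then the sequent $(g,d)$ is derivable in the orthologic sequent calculus $\mathcal{P}$.
   Context: Terms are generated by the grammar $t ::= \mathrm{Var}(k) \mid \mathrm{Meet}(t,t) \mid \mathrm{Join}(t,t) \mid \mathrm{Not}(t)$, where $k$ ranges over positive integers. An annotated term is either $N$, $L\,t$ or $R\,t$ for a term $t$. A sequent is an ordered pair of annotated terms. The proof system $\mathcal{P}$: the derivable sequents form the least set of sequents closed under the following rules, where $\gamma,\delta$ are arbitrary annotated terms and $a,b$ are terms. - Hyp: $(L\,a,R\,a)$. - Weaken: from $(\gamma,N)$ infer $(\gamma,\delta)$. - Contract: from $(\gamma,\gamma)$ infer $(\gamma,N)$. - Swap: from $(\gamma,\delta)$ infer $(\delta,\gamma)$. - LeftAnd1 and LeftAnd2: from $(\gamma,L\,a)$, respectively from $(\gamma,L\,b)$, infer $(\gamma,L\,\mathrm{Meet}(a,b))$. - LeftOr: from $(\gamma,L\,a)$ and $(\gamma,L\,b)$ infer $(\gamma,L\,\mathrm{Join}(a,b))$. - LeftNot: from $(\gamma,R\,a)$ infer $(\gamma,L\,\mathrm{Not}(a))$. - RightAnd: from $(\gamma,R\,a)$ and $(\gamma,R\,b)$ infer $(\gamma,R\,\mathrm{Meet}(a,b))$. - RightOr1 and RightOr2: from $(\gamma,R\,a)$, respectively from $(\gamma,R\,b)$, infer $(\gamma,R\,\mathrm{Join}(a,b))$. - RightNot: from $(\gamma,L\,a)$ infer $(\gamma,R\,\mathrm{Not}(a))$.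 - Cut: from $(\gamma,R\,b)$ and $(L\,b,\delta)$ infer $(\gamma,\delta)$. The fuel-bounded proof-search function $\mathrm{decide}:\mathbb{N}\times\mathrm{AnTerm}\times\mathrm{AnTerm}\to\{\mathrm{true},\mathrm{false}\}$ is defined recursively. First, $\mathrm{decide}(0,g,d)=\mathrm{false}$. Second, $\mathrm{decide}(n+1,g,d)=\mathrm{true}$ iff at least one of the following holds, where every recursive call uses fuel $n$: - $g=L\,\mathrm{Var}(a)$ and $d=R\,\mathrm{Var}(a)$ for the same $a$; - $\mathrm{decide}(n,g,N)$; - $d=N$ and $\mathrm{decide}(n,g,g)$; - $g=L\,\mathrm{Meet}(a,b)$ and $\mathrm{decide}(n,L\,a,d)$; - $g=L\,\mathrm{Meet}(a,b)$ and $\mathrm{decide}(n,L\,b,d)$; - $g=L\,\mathrm{Join}(a,b)$ and both $\mathrm{decide}(n,L\,a,d)$ and $\mathrm{decide}(n,L\,b,d)$; - $g=L\,\mathrm{Not}(a)$ and $\mathrm{decide}(n,R\,a,d)$; - $g=R\,\mathrm{Join}(a,b)$ and $\mathrm{decide}(n,R\,a,d)$; - $g=R\,\mathrm{Join}(a,b)$ and $\mathrm{decide}(n,R\,b,d)$; - $g=R\,\mathrm{Meet}(a,b)$ and both $\mathrm{decide}(n,R\,a,d)$ and $\mathrm{decide}(n,R\,b,d)$; - $g=R\,\mathrm{Not}(a)$ and $\mathrm{decide}(n,L\,a,d)$; - $\mathrm{decide}(n,d,g)$. *)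

(* Defs.v *)
From Stdlib Require Import PArith Bool.

Inductive Term : Type :=
| Var : positive -> Term
| Meet : Term -> Term -> Term
| Join : Term -> Term -> Term
| Not : Term -> Term.

Inductive AnTerm : Type :=
| N : AnTerm
| L : Term -> AnTerm
| R : Term -> AnTerm.

Inductive P : AnTerm -> AnTerm -> Prop :=
| Hyp : forall a, P (L a) (R a)
| Weaken : forall g d, P g N -> P g d
| Contract : forall g, P g g -> P g N
| Swap : forall g d, P g d -> P d g
| LeftAnd1 : forall g a b, P g (L a) -> P g (L (Meet a b))
| LeftAnd2 : forall g a b, P g (L b) -> P g (L (Meet a b))
| LeftOr : forall g a b, P g (L a) -> P g (L b) -> P g (L (Join a b))
| LeftNot : forall g a, P g (R a) -> P g (L (Not a))
| RightAnd : forall g a b, P g (R a) -> P g (R b) -> P g (R (Meet a b))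
| RightOr1 : forall g a b, P g (R a) -> P g (R (Join a b))
| RightOr2 : forall g a b, P g (R b) -> P g (R (Join a b))
| RightNot : forall g a, P g (L a) -> P g (R (Not a))
| Cut : forall g d b, P g (R b) -> P (L b) d -> P g d.

Definition isN (d : AnTerm) : bool := match d with N => true | _ => false end.

Fixpoint decide (n : nat) (g d : AnTerm) {struct n} : bool :=
  match n with
  | O => false
  | S n' =>
    (match g, d with
     | L (Var a), R (Var b) => Pos.eqb a b
     | _, _ => false
     end)
    || decide n' g N
    || (isN d && decide n' g g)
    || (match g with
        | L (Meet a b) => decide n' (L a) d || decide n' (L b) d
        | L (Join a b) => decide n' (L a) d && decide n' (L b) d
        | L (Not a) => decide n' (R a) d
        | R (Join a b) => decide n' (R a) d || decide n' (R b) d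
        | R (Meet a b) => decide n' (R a) d && decide n' (R b) d
        | R (Not a) => decide n' (L a) d
        | _ => false
        end)
    || decide n' d g
  end.

(* Main.v *)
Require Import Defs.
From Stdlib Require Import PArith Bool.

Theorem mainTheorem2 : forall (n : nat) (g d : AnTerm),
  decide n g d = true -> P g d.
Proof.
  induction n as [|n IH]; intros g d H; simpl in H; [discriminate|].
  repeat (apply orb_true_iff in H; destruct H as [H|H]).
  - destruct g as [|[a| | |]|]; try discriminate;
    destruct d as [| |[b| | |]]; try discriminate.
    apply Pos.eqb_eq in H; subst; apply Hyp.
  - apply Weaken, IH, H.
  - apply andb_true_iff in H; destruct H as [H1 H2].
    destruct d; try discriminate. apply Contract, IH, H2.
  - destruct g as [|[a|a b|a b|a]|[a|a b|a b|a]]; try discriminate.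
    + apply orb_true_iff in H; destruct H as [H|H];
      apply Swap; [apply LeftAnd1|apply LeftAnd2]; apply Swap, IH, H.
    + apply andb_true_iff in H; destruct H as [H1 H2].
      apply Swap, LeftOr; apply Swap, IH; assumption.
    + apply Swap, LeftNot, Swap, IH, H.
    + apply andb_true_iff in H; destruct H as [H1 H2].
      apply Swap, RightAnd; apply Swap, IH; assumption.
    + apply orb_true_iff in H; destruct H as [H|H];
      apply Swap; [apply RightOr1|apply RightOr2]; apply Swap, IH, H.
    + apply Swap, RightNot, Swap, IH, H.
  - apply Swap, IH, H.
Qed.
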